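(* Let $\mathbf{T}\subset\mathbb{S}^3$ be a $\mathbb{Z}_2$-symmetric spherical tetrahedron with dihedral angles $A$, $B=E$, $C=F$, $D$ and edge lengths $l_A$, $l_B=l_E$, $l_C=l_F$, $l_D$. Put $\mathcal{A}_+=\cos\frac{A+D}{2}$, $\mathcal{A}_-=\cos\frac{D-A}{2}$, $\mathcal{B}=\cos B$, $\mathcal{C}=\cos C$, and $$\Delta=(\mathcal{A}_--\mathcal{A}_+-\mathcal{B}-\mathcal{C})(\mathcal{A}_--\mathcal{A}_++\mathcal{B}+\mathcal{C})(\mathcal{A}_-+\mathcal{A}_+-\mathcal{B}+\mathcal{C})(\mathcal{A}_-+\mathcal{A}_++\mathcal{B}-\mathcal{C}).$$ Then the dual parameter $v=\sqrt{c_{00}c_{22}/\det G}$ of $\mathbf{T}$ is a positive root of the quadratic equation $$v^2-\frac{4\,(\mathcal{A}_+\mathcal{A}_-+\mathcal{B}\mathcal{C})(\mathcal{A}_+\mathcal{B}+\mathcal{A}_-\mathcal{C})(\mathcal{A}_+\mathcal{C}+\mathcal{A}_-\mathcal{B})}{\Delta}=1.$$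
   Context: A spherical tetrahedron $\mathbf{T}\subset\mathbb{S}^3\subset\mathbb{R}^4$ is the intersection of $\mathbb{S}^3$ with the cone over four linearly independent unit vectors $\mathrm{p}_0,\dots,\mathrm{p}_3$. Edge lengths $l_{ij}\in[0,\pi]$: $\cos l_{ij}=\langle\mathrm{p}_i,\mathrm{p}_j\rangle$; dihedral angles $\alpha_{ij}\in[0,\pi]$: $\cos\alpha_{ij}=-\langle\mathrm{v}_i,\mathrm{v}_j\rangle$ with $\mathrm{v}_i$ the outer unit normal of the face opposite $\mathrm{p}_i$. Notation: $l_A=l_{01}$, $l_B=l_{02}$, $l_C=l_{03}$, $l_D=l_{23}$, $l_E=l_{13}$, $l_F=l_{12}$; $A,\dots,F$ are the dihedral angles along the edges of lengths $l_A,\dots,l_F$. The Gram matrix is $G=(\langle\mathrm{v}_i,\mathrm{v}_j\rangle)_{i,j=0}^3=\begin{pmatrix}1&-\cos D&-\cos E&-\cos F\\ -\cos D&1&-\cos C&-\cos B\\ -\cos E&-\cos C&1&-\cos A\\ -\cos F&-\cos B&-\cos A&1\end{pmatrix}$, and $c_{ij}$ denotes its $(i,j)$-cofactor $(-1)^{i+j}\det(\text{minor})$. $\mathbf{T}$ is $\mathbb{Z}_2$-symmetric if invariant under rotation through $\pi$ about the axis through the midpoints of the edges $\mathrm{p}_0\mathrm{p}_1$ and $\mathrm{p}_2\mathrm{p}_3$ (so $l_B=l_E$, $l_C=l_F$, $B=E$, $C=F$). *)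

(* Defs.v *)
From mathcomp Require Import all_boot all_order all_algebra.
From mathcomp Require Import reals trigo.
Set Implicit Arguments. Unset Strict Implicit. Unset Printing Implicit Defensive.
Import Order.TTheory GRing.Theory Num.Theory.
Local Open Scope ring_scope.

Section SphTet.
Variable R : realType.

Definition dot4 (u w : 'rV[R]_4) : R := \sum_(k < 4) u 0 k * w 0 k.

Definition vmx (p : 'I_4 -> 'rV[R]_4) : 'M[R]_4 :=
  \matrix_(i < 4, j < 4) p i 0 j.

Definition sph_tetrahedron (p : 'I_4 -> 'rV[R]_4) : Prop :=
  (forall i, dot4 (p i) (p i) = 1) /\ row_free (vmx p).

Definition outer_unit_normal (p : 'I_4 -> 'rV[R]_4) (i : 'I_4) (v : 'rV[R]_4) : Prop :=
  dot4 v v = 1 /\ (forall j, j != i -> dot4 v (p j) = 0) /\ dot4 v (p i) < 0.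

Definition dihedral (v : 'I_4 -> 'rV[R]_4) (i j : 'I_4) : R :=
  acos (- dot4 (v i) (v j)).

Definition gram (v : 'I_4 -> 'rV[R]_4) : 'M[R]_4 :=
  \matrix_(i < 4, j < 4) dot4 (v i) (v j).

(* Z_2-symmetry: invariance under the rotation through pi about the axis
   through the midpoints of p0p1 and p2p3, i.e. an orthogonal map of R^4
   swapping p0 <-> p1 and p2 <-> p3. *)
Definition Z2_symmetric (p : 'I_4 -> 'rV[R]_4) : Prop :=
  exists Q : 'M[R]_4, Q *m Q^T = 1%:M /\
    p 0 *m Q = p 1 /\ p 1 *m Q = p 0 /\
    p 2%:R *m Q = p 3%:R /\ p 3%:R *m Q = p 2%:R.

End SphTet.

(* Main.v *)
Require Import Defs.
From mathcomp Require Import all_boot all_order all_algebra.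
From mathcomp Require Import reals trigo.
Import Order.TTheory GRing.Theory Num.Theory.
Local Open Scope ring_scope.
From mathcomp Require Import ring lra.
Lemma det4f (R : comNzRingType) (f : nat -> nat -> R) :
  \det (\matrix_(i < 4, j < 4) f i j) =
  f 0%N 0%N * f 1%N 1%N * f 2%N 2%N * f 3%N 3%N
  - f 0%N 0%N * f 1%N 1%N * f 2%N 3%N * f 3%N 2%N
  - f 0%N 0%N * f 1%N 2%N * f 2%N 1%N * f 3%N 3%N
  + f 0%N 0%N * f 1%N 2%N * f 2%N 3%N * f 3%N 1%N
  + f 0%N 0%N * f 1%N 3%N * f 2%N 1%N * f 3%N 2%N
  - f 0%N 0%N * f 1%N 3%N * f 2%N 2%N * f 3%N 1%N
  - f 0%N 1%N * f 1%N 0%N * f 2%N 2%N * f 3%N 3%N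
  + f 0%N 1%N * f 1%N 0%N * f 2%N 3%N * f 3%N 2%N
  + f 0%N 1%N * f 1%N 2%N * f 2%N 0%N * f 3%N 3%N
  - f 0%N 1%N * f 1%N 2%N * f 2%N 3%N * f 3%N 0%N
  - f 0%N 1%N * f 1%N 3%N * f 2%N 0%N * f 3%N 2%N
  + f 0%N 1%N * f 1%N 3%N * f 2%N 2%N * f 3%N 0%N
  + f 0%N 2%N * f 1%N 0%N * f 2%N 1%N * f 3%N 3%N
  - f 0%N 2%N * f 1%N 0%N * f 2%N 3%N * f 3%N 1%N
  - f 0%N 2%N * f 1%N 1%N * f 2%N 0%N * f 3%N 3%N
  + f 0%N 2%N * f 1%N 1%N * f 2%N 3%N * f 3%N 0%N
  + f 0%N 2%N * f 1%N 3%N * f 2%N 0%N * f 3%N 1%N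
  - f 0%N 2%N * f 1%N 3%N * f 2%N 1%N * f 3%N 0%N
  - f 0%N 3%N * f 1%N 0%N * f 2%N 1%N * f 3%N 2%N
  + f 0%N 3%N * f 1%N 0%N * f 2%N 2%N * f 3%N 1%N
  + f 0%N 3%N * f 1%N 1%N * f 2%N 0%N * f 3%N 2%N
  - f 0%N 3%N * f 1%N 1%N * f 2%N 2%N * f 3%N 0%N
  - f 0%N 3%N * f 1%N 2%N * f 2%N 0%N * f 3%N 1%N
  + f 0%N 3%N * f 1%N 2%N * f 2%N 1%N * f 3%N 0%N.
Proof.
rewrite (expand_det_row _ 0) /cofactor !big_ord_recl !big_ord0.
rewrite !(expand_det_row _ 0) /cofactor !big_ord_recl !big_ord0.
rewrite !(expand_det_row _ 0) /cofactor !big_ord_recl !big_ord0.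
rewrite !det_mx11 !mxE /= /bump /=.
ring.
Qed.
Lemma cof22f (R : comNzRingType) (f : nat -> nat -> R) :
  cofactor (\matrix_(i < 4, j < 4) f i j) 2%:R 2%:R =
  f 0%N 0%N * (f 1%N 1%N * f 3%N 3%N - f 1%N 3%N * f 3%N 1%N)
  - f 0%N 1%N * (f 1%N 0%N * f 3%N 3%N - f 1%N 3%N * f 3%N 0%N)
  + f 0%N 3%N * (f 1%N 0%N * f 3%N 1%N - f 1%N 1%N * f 3%N 0%N).
Proof.
rewrite /cofactor.
rewrite !(expand_det_row _ 0) /cofactor !big_ord_recl !big_ord0.
rewrite !(expand_det_row _ 0) /cofactor !big_ord_recl !big_ord0.
rewrite !det_mx11 !mxE /= /bump /=.
ring.
Qed.
Lemma cof00f (R : comNzRingType) (f : nat -> nat -> R) :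
  cofactor (\matrix_(i < 4, j < 4) f i j) 0 0 =
  f 1%N 1%N * (f 2%N 2%N * f 3%N 3%N - f 2%N 3%N * f 3%N 2%N)
  - f 1%N 2%N * (f 2%N 1%N * f 3%N 3%N - f 2%N 3%N * f 3%N 1%N)
  + f 1%N 3%N * (f 2%N 1%N * f 3%N 2%N - f 2%N 2%N * f 3%N 1%N).
Proof.
rewrite /cofactor.
rewrite !(expand_det_row _ 0) /cofactor !big_ord_recl !big_ord0.
rewrite !(expand_det_row _ 0) /cofactor !big_ord_recl !big_ord0.
rewrite !det_mx11 !mxE /= /bump /=.
ring.
Qed.

Set Implicit Arguments.

Section L2.
Variable R : realType.
Implicit Types u w : 'rV[R]_4.

Lemma dotC u w : dot4 u w = dot4 w u.
Proof. by apply: eq_bigr => k _; rewrite mulrC. Qed.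

Lemma dot_mx u w : dot4 u w = (u *m w^T) 0 0.
Proof. by rewrite mxE; apply: eq_bigr => k _; rewrite mxE. Qed.

Lemma dotQ u w (Q : 'M[R]_4) : Q *m Q^T = 1%:M -> dot4 (u *m Q) (w *m Q) = dot4 u w.
Proof.
by move=> HQ; rewrite !dot_mx trmx_mul mulmxA -(mulmxA u) HQ mulmx1.
Qed.

Lemma dotZZ u w (a b : R) : dot4 (a *: u) (b *: w) = a * b * dot4 u w.
Proof.
rewrite /dot4 mulr_sumr; apply: eq_bigr => k _; rewrite !mxE; ring.
Qed.

Lemma dot_cs u w : dot4 u u = 1 -> dot4 w w = 1 -> -1 <= dot4 u w <= 1.
Proof.
rewrite /dot4 !big_ord_recl !big_ord0 => Hu Hw.
set u0 := u 0 _ in Hu *; set u1 := u 0 _ in Hu *; set u2 := u 0 _ in Hu *; set u3 := u 0 _ in Hu *.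
set w0 := w 0 _ in Hw *; set w1 := w 0 _ in Hw *; set w2 := w 0 _ in Hw *; set w3 := w 0 _ in Hw *.
have h1 := sqr_ge0 (u0 + w0); have h2 := sqr_ge0 (u1 + w1).
have h3 := sqr_ge0 (u2 + w2); have h4 := sqr_ge0 (u3 + w3).
have g1 := sqr_ge0 (u0 - w0); have g2 := sqr_ge0 (u1 - w1).
have g3 := sqr_ge0 (u2 - w2); have g4 := sqr_ge0 (u3 - w3).
apply/andP; split; nra.
Qed.
End L2.


Section L3.
Variable R : realType.
Implicit Types u w : 'rV[R]_4.
Variables (p v : 'I_4 -> 'rV[R]_4).
Hypothesis Hn : forall i, outer_unit_normal p i (v i).

Lemma gramE : gram v = vmx v *m (vmx v)^T.
Proof. apply/matrixP => i j; rewrite !mxE; apply: eq_bigr => k _; by rewrite !mxE. Qed.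

Definition dr := \row_(i < 4) dot4 (p i) (v i).
Definition di := \row_(i < 4) (dot4 (p i) (v i))^-1.

Lemma dr_neq0 i : dot4 (p i) (v i) != 0.
Proof. by have [_ [_ h]] := Hn i; rewrite dotC lt_eqF. Qed.

Lemma PVt : vmx p *m (vmx v)^T = diag_mx dr.
Proof.
apply/matrixP => i j; rewrite !mxE.
transitivity (dot4 (p i) (v j)); first by apply: eq_bigr => k _; rewrite !mxE.
case: (eqVneq i j) => [->|nij]; first by rewrite ?eqxx ?mulr1n.
rewrite mulr0n dotC; have [_ [h _]] := Hn j; by rewrite h // eq_sym.
Qed.

Lemma detPV : \det (vmx p) * \det (vmx v) != 0.
Proof.
rewrite -(det_tr (vmx v)) -det_mulmx PVt det_diag.
rewrite prodf_seq_neq0; apply/allP => i _ /=; rewrite mxE; exact: dr_neq0.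
Qed.

Lemma P_unit : vmx p \in unitmx.
Proof. by rewrite unitmxE unitfE; move: detPV; rewrite mulf_eq0 negb_or => /andP[]. Qed.

Lemma detG_gt0 : 0 < \det (gram v).
Proof.
rewrite gramE det_mulmx det_tr.
have : \det (vmx v) != 0 by move: detPV; rewrite mulf_eq0 negb_or => /andP[].
by move=> h; rewrite -expr2 lt_def sqr_ge0 sqrf_eq0 h.
Qed.

Lemma diag_inv : diag_mx dr *m diag_mx di = 1%:M.
Proof.
rewrite mulmx_diag; apply/matrixP => i j; rewrite !mxE.
by rewrite mulfV ?dr_neq0.
Qed.

Definition Hm := diag_mx di *m (vmx p *m (vmx p)^T) *m diag_mx di.

Lemma GH : gram v *m Hm = 1%:M.
Proof.
have h1 : vmx p *m ((vmx v)^T *m diag_mx di) = 1%:M by rewrite mulmxA PVt diag_inv.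
have h2 := mulmx1C h1.
rewrite gramE /Hm.
have -> : vmx v *m (vmx v)^T *m (diag_mx di *m (vmx p *m (vmx p)^T) *m diag_mx di)
  = vmx v *m (((vmx v)^T *m diag_mx di) *m vmx p) *m (vmx p)^T *m diag_mx di
  by rewrite !mulmxA.
rewrite h2 mulmx1 -(trmxK (vmx v)) -trmx_mul PVt tr_diag_mx diag_inv //.
Qed.

Hypothesis Hp : forall i, dot4 (p i) (p i) = 1.

Lemma Hm_ii i : Hm i i = (dot4 (p i) (v i))^-2.
Proof.
rewrite /Hm mul_mx_diag mul_diag_mx !mxE.
have -> : \sum_j vmx p i j * (vmx p)^T j i = dot4 (p i) (p i).
  by apply: eq_bigr => k _; rewrite !mxE.
by rewrite Hp mulr1 -invrM // ?unitfE ?dr_neq0.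
Qed.

Lemma cofE i : cofactor (gram v) i i = \det (gram v) * (dot4 (p i) (v i))^-2.
Proof.
have : \adj (gram v) = \det (gram v) *: Hm.
  by rewrite -[\adj _]mulmx1 -GH mulmxA mul_adj_mx mul_scalar_mx.
move/matrixP => /(_ i i); rewrite mxE [in X in _ = X -> _]mxE Hm_ii => ->.
done.
Qed.

Lemma cof_gt0 i : 0 < cofactor (gram v) i i.
Proof.
rewrite cofE mulr_gt0 ?detG_gt0 // invr_gt0 lt_def sqr_ge0 sqrf_eq0 dr_neq0 //.
Qed.
End L3.


Section L4.
Variable R : realType.
Implicit Types u w : 'rV[R]_4.
Variables (p v : 'I_4 -> 'rV[R]_4).
Hypothesis Hn : forall i, outer_unit_normal p i (v i).

Lemma normal_uniq i u u' : outer_unit_normal p i u -> outer_unit_normal p i u' -> u = u'.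
Proof.
move=> [Hu [Hu0 Hun]] [Hu' [Hu0' Hun']].
set d := dot4 u (p i) in Hun *; set d' := dot4 u' (p i) in Hun' *.
have hx : (d' *: u - d *: u') *m (vmx p)^T = 0.
  apply/matrixP => a j; rewrite [RHS]mxE.
  transitivity (d' * dot4 u (p j) - d * dot4 u' (p j)).
    rewrite mxE /dot4 !mulr_sumr -sumrB; apply: eq_bigr => k _; rewrite !mxE.
    by rewrite (ord1 a); ring.
  case: (eqVneq j i) => [->|nji]; first by rewrite -/d -/d'; ring.
  by rewrite Hu0 // Hu0' //; ring.
have hP : (vmx p)^T \in unitmx by rewrite unitmx_tr (@P_unit R p v Hn).
have := mulmxK hP (d' *: u - d *: u'); rewrite hx mul0mx => /esym /eqP.
rewrite subr_eq0 => /eqP he.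
have hd : d' = d.
  have := congr1 (fun x => dot4 x x) he; rewrite /= !dotZZ Hu Hu' !mulr1 => h.
  nra.
move: he; rewrite hd; apply: scalerI; by rewrite lt_eqF.
Qed.

Lemma normalQ (Q : 'M[R]_4) i j : Q *m Q^T = 1%:M ->
  (forall k, exists k', p k = p k' *m Q /\ (k' == j) = (k == i))
  -> outer_unit_normal p i (v j *m Q).
Proof.
move=> HQ hk; have [h1 [h2 h3]] := Hn j.
split; first by rewrite dotQ.
have [k' [hk' ek']] := hk i; move: ek'; rewrite eqxx => /eqP ek'.
split; last by rewrite hk' dotQ // ek'.
move=> k nki; have [k'' [hk'' ek'']] := hk k.
rewrite hk'' dotQ // h2 // ek'' //.
Qed.

Lemma Z2_sym Q : Q *m Q^T = 1%:M ->
    p 0 *m Q = p 1 /\ p 1 *m Q = p 0 /\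
    p 2%:R *m Q = p 3%:R /\ p 3%:R *m Q = p 2%:R ->
  v 1 = v 0 *m Q /\ v 3%:R = v 2%:R *m Q /\ v 2%:R = v 3%:R *m Q.
Proof.
move=> HQ [e0 [e1 [e2 e3]]].
have ord4 : forall (k : 'I_4), k = 0 \/ k = 1 \/ k = 2%:R \/ k = 3%:R.
  case=> [[|[|[|[|m]]]] Hk] //.
  - by left; apply/val_inj.
  - by right; left; apply/val_inj.
  - by right; right; left; apply/val_inj.
  - by right; right; right; apply/val_inj.
have sw : forall k, exists k', p k = p k' *m Q /\
    (k' == 0) = (k == 1) /\ (k' == 2%:R) = (k == 3%:R) /\ (k' == 3%:R) = (k == 2%:R).
  move=> k; case: (ord4 k) => [->|[->|[->|->]]].
  - by exists 1; rewrite e1.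
  - by exists 0; rewrite e0.
  - by exists 3%:R; rewrite e3.
  - by exists 2%:R; rewrite e2.
split; [|split]; apply: (normal_uniq (Hn _)); apply: normalQ => // k;
  have [k' [h [h0 [h2 h3]]]] := sw k; by exists k'.
Qed.
End L4.

Unset Implicit Arguments.

Definition gfun {R : realType} (v : 'I_4 -> 'rV[R]_4) (i j : nat) : R :=
  dot4 (v (inord i)) (v (inord j)).

Lemma gramM (R : realType) (v : 'I_4 -> 'rV[R]_4) :
  gram v = \matrix_(i < 4, j < 4) gfun v i j.
Proof. by apply/matrixP => i j; rewrite !mxE /gfun !inord_val. Qed.

Lemma cos_dih (R : realType) (p v : 'I_4 -> 'rV[R]_4) :
  (forall i, outer_unit_normal p i (v i)) ->
  forall i j, cos (dihedral v i j) = - dot4 (v i) (v j).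
Proof.
move=> Hn i j; rewrite /dihedral acosK // in_itv /=.
have := dot_cs (Hn i).1 (Hn j).1 => /andP[h1 h2].
apply/andP; split; lra.
Qed.

Theorem lemma3 (R : realType) (p v : 'I_4 -> 'rV[R]_4) :
  sph_tetrahedron p ->
  (forall i, outer_unit_normal p i (v i)) ->
  Z2_symmetric p ->
  let A := dihedral v 2%:R 3%:R in
  let B := dihedral v 1 3%:R in
  let C := dihedral v 1 2%:R in
  let D := dihedral v 0 1 in
  let G := gram v in
  let cA_plus := cos ((A + D) / 2) in
  let cA_minus := cos ((D - A) / 2) in
  let cB := cos B in
  let cC := cos C in
  let Delta := (cA_minus - cA_plus - cB - cC) * (cA_minus - cA_plus + cB + cC)
             * (cA_minus + cA_plus - cB + cC) * (cA_minus + cA_plus + cB - cC) in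
  let dv := Num.sqrt (cofactor G 0 0 * cofactor G 2%:R 2%:R / \det G) in
  0 < dv /\
  dv ^+ 2 - 4 * (cA_plus * cA_minus + cB * cC) * (cA_plus * cB + cA_minus * cC)
              * (cA_plus * cC + cA_minus * cB) / Delta = 1.
Proof.
move=> [Hp _] Hn [Q [HQ He]] A B C D G X Y b c Delta dv.
have [e1 [e3 e2]] := Z2_sym v Hn HQ He.
have detpos : 0 < \det G := detG_gt0 v Hn.
have arg_pos : 0 < cofactor G 0 0 * cofactor G 2%:R 2%:R / \det G.
  by rewrite divr_gt0 // mulr_gt0 // (cof_gt0 v Hn Hp).
split; first by rewrite /dv sqrtr_gt0.
rewrite /dv sqr_sqrtr ?ltW //.
set a := cos A; set d := cos D.
have ha : dot4 (v 2%:R) (v 3%:R) = -a by rewrite /a /A (cos_dih _ _ _ Hn) opprK.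
have hb : dot4 (v 1) (v 3%:R) = -b by rewrite /b /B (cos_dih _ _ _ Hn) opprK.
have hc : dot4 (v 1) (v 2%:R) = -c by rewrite /c /C (cos_dih _ _ _ Hn) opprK.
have hd : dot4 (v 0) (v 1) = -d by rewrite /d /D (cos_dih _ _ _ Hn) opprK.
have hb2 : dot4 (v 0) (v 2%:R) = -b by rewrite -hb e1 e3 dotQ.
have hc2 : dot4 (v 0) (v 3%:R) = -c by rewrite -hc e1 e2 dotQ.
have i0 : inord 0 = (0 : 'I_4) := inord_val 0.
have i1 : inord 1 = (1 : 'I_4) := inord_val 1.
have i2 : inord 2 = (2%:R : 'I_4) := inord_val 2%:R.
have i3 : inord 3 = (3%:R : 'I_4) := inord_val 3%:R.
have g00 : gfun v 0%N 0%N = 1 by rewrite /gfun i0; exact: (Hn _).1.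
have g01 : gfun v 0%N 1%N = -d by rewrite /gfun i0 i1 hd.
have g02 : gfun v 0%N 2%N = -b by rewrite /gfun i0 i2 hb2.
have g03 : gfun v 0%N 3%N = -c by rewrite /gfun i0 i3 hc2.
have g10 : gfun v 1%N 0%N = -d by rewrite /gfun i1 i0 dotC hd.
have g11 : gfun v 1%N 1%N = 1 by rewrite /gfun i1; exact: (Hn _).1.
have g12 : gfun v 1%N 2%N = -c by rewrite /gfun i1 i2 hc.
have g13 : gfun v 1%N 3%N = -b by rewrite /gfun i1 i3 hb.
have g20 : gfun v 2%N 0%N = -b by rewrite /gfun i2 i0 dotC hb2.
have g21 : gfun v 2%N 1%N = -c by rewrite /gfun i2 i1 dotC hc.
have g22 : gfun v 2%N 2%N = 1 by rewrite /gfun i2; exact: (Hn _).1.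
have g23 : gfun v 2%N 3%N = -a by rewrite /gfun i2 i3 ha.
have g30 : gfun v 3%N 0%N = -c by rewrite /gfun i3 i0 dotC hc2.
have g31 : gfun v 3%N 1%N = -b by rewrite /gfun i3 i1 dotC hb.
have g32 : gfun v 3%N 2%N = -a by rewrite /gfun i3 i2 dotC ha.
have g33 : gfun v 3%N 3%N = 1 by rewrite /gfun i3; exact: (Hn _).1.
have hc00 : cofactor G 0 0 = 1 - a^+2 - b^+2 - c^+2 - 2*a*b*c.
  rewrite /G gramM cof00f g11 g12 g13 g21 g22 g23 g31 g32 g33; ring.
have hc22 : cofactor G 2%:R 2%:R = 1 - d^+2 - b^+2 - c^+2 - 2*b*c*d.
  rewrite /G gramM cof22f g00 g01 g03 g10 g11 g13 g30 g31 g33; ring.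
have hdet : \det G = ((1-a)*(1-d)-(b+c)^+2)*((1+a)*(1+d)-(b-c)^+2).
  rewrite /G gramM det4f g00 g01 g02 g03 g10 g11 g12 g13 g20 g21 g22 g23 g30 g31 g32 g33.
  ring.
set sx := sin ((A + D) / 2); set sy := sin ((D - A) / 2).
have eA : A = (A + D) / 2 - (D - A) / 2 by field.
have eD : D = (A + D) / 2 + (D - A) / 2 by field.
have ca : a = X * Y + sx * sy by rewrite /a {1}eA cosB.
have cd : d = X * Y - sx * sy by rewrite /d {1}eD cosD.
have h1 : X * Y = (a + d) / 2 by rewrite ca cd; field.
have sxE : sx ^+ 2 = 1 - X ^+ 2 by rewrite -(cos2Dsin2 ((A + D) / 2)) -/X -/sx; ring.
have syE : sy ^+ 2 = 1 - Y ^+ 2 by rewrite -(cos2Dsin2 ((D - A) / 2)) -/Y -/sy; ring.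
have h2 : X ^+ 2 + Y ^+ 2 = 1 + a * d.
  have e : (X * Y + sx * sy) * (X * Y - sx * sy) = X^+2 * Y^+2 - sx^+2 * sy^+2 by ring.
  by rewrite ca cd e sxE syE; ring.
have hD : Delta = \det G.
  rewrite hdet /Delta.
  transitivity ((X^+2 + Y^+2 - 2 * (X * Y) - (b + c)^+2) * (X^+2 + Y^+2 + 2 * (X * Y) - (b - c)^+2)); first by ring.
  by rewrite h1 h2; field.
have hN : 4 * (X * Y + b * c) * (X * b + Y * c) * (X * c + Y * b) =
    4 * (((a + d) / 2 + b * c) * ((a + d) / 2 * (b^+2 + c^+2) + b * c * (1 + a * d))).
  transitivity (4 * ((X * Y + b * c) * ((X * Y) * (b^+2 + c^+2) + b * c * (X^+2 + Y^+2)))); first by ring.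
  by rewrite h1 h2.
have hPG : \det G != 0 by rewrite gt_eqF.
rewrite hN hD -mulrBl -[RHS](divff hPG); congr (_ / _).
by rewrite hc00 hc22 hdet; field.
Qed.
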